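(* For $\mu\in[-\pi,\pi)$ and $\rho\in[0,1)$, let $\operatorname{WC}(\mu,\rho)$ denote the wrapped Cauchy distribution on $[-\pi,\pi)$ with density $\frac{1}{2\pi}\frac{1-\rho^2}{1+\rho^2-2\rho\cos(\theta-\mu)}$. Suppose $\Theta\mid\nu\sim\operatorname{WC}(\nu,\rho_1)$ with known $\rho_1\in[0,1)$, and the prior distribution of $\nu$ is $\operatorname{WC}(\mu_2,\rho_2)$ with $\mu_2\in[-\pi,\pi)$, $\rho_2\in[0,1)$. Then for $\mu_1\in[-\pi,\pi)$, the posterior distribution of $\nu$ given $\Theta=\mu_1$ has density $$f(\nu)=C\left[\{1+\rho_1^2-2\rho_1\cos(\nu-\mu_1)\}\{1+\rho_2^2-2\rho_2\cos(\nu-\mu_2)\}\right]^{-1},\qquad -\pi\le\nu<\pi,$$ where $C=\dfrac{(1-\rho_1^2)(1-\rho_2^2)\{1+\rho_1^2\rho_2^2-2\rho_1\rho_2\cos(\mu_1-\mu_2)\}}{2\pi(1-\rho_1^2\rho_2^2)}$. *)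

(* Defs.v *)
From Stdlib Require Import Reals.
From Coquelicot Require Import Coquelicot.
Open Scope R_scope.

Definition wc_density (mu rho theta : R) : R :=
  / (2 * PI) * ((1 - rho ^ 2) / (1 + rho ^ 2 - 2 * rho * cos (theta - mu))).

(* Posterior density of nu given Theta = mu1 (Bayes' formula for densities):
   Theta | nu ~ WC(nu, rho1), prior nu ~ WC(mu2, rho2).
   posterior(nu) = lik(mu1 | nu) prior(nu) / int_{-pi}^{pi} lik(mu1 | v) prior(v) dv *)
Definition wc_posterior_density (rho1 mu2 rho2 mu1 nu : R) : R :=
  wc_density nu rho1 mu1 * wc_density mu2 rho2 nu /
  RInt (fun v => wc_density v rho1 mu1 * wc_density mu2 rho2 v) (- PI) PI.

(* Main.v *)
Require Import Defs.
From Stdlib Require Import Reals Lra.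
From Coquelicot Require Import Coquelicot.
Open Scope R_scope.

Definition Aq r m x := 1 + r^2 - 2*r*cos(x-m).
Lemma Aq_pos r m x : 0 <= r < 1 -> 0 < Aq r m x.
Proof. intros. unfold Aq. pose proof (COS_bound (x-m)). nra. Qed.
Lemma den_pos r m x : 0 <= r < 1 -> 0 < 1 - r * cos (x-m).
Proof. intros. pose proof (COS_bound (x-m)). nra. Qed.
Lemma sc t : sin t ^ 2 + cos t ^ 2 = 1.
Proof. rewrite <- (sin2_cos2 t). unfold Rsqr. ring. Qed.

Definition Gf r m x := (x - m) + 2 * atan (r * sin (x - m) / (1 - r * cos (x - m))).
Definition Lf r m x := ln (Aq r m x).
Definition Sf r m x := sin (x - m) / Aq r m x.

Lemma dG r m x : 0 <= r < 1 -> is_derive (Gf r m) x ((1-r^2)/Aq r m x).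
Proof. intros. pose proof (den_pos r m x H). pose proof (Aq_pos r m x H).
 unfold Gf. auto_derive; replace (x + - m) with (x - m) by ring. lra.
 unfold Aq in *.
 pose proof (sc (x-m)).
 set (c := cos (x-m)) in *. set (s := sin (x-m)) in *. clearbody c s.
 assert (0 < 1 + (r*s/(1-r*c))^2) by (pose proof (pow2_ge_0 (r*s/(1-r*c))); lra).
 field_simplify_eq. replace (s^2) with (1-c^2) by lra. ring.
 repeat split; nra.
Qed.

Lemma dL r m x : 0 <= r < 1 -> is_derive (Lf r m) x (2*r*sin(x-m)/Aq r m x).
Proof. intros. pose proof (Aq_pos r m x H). unfold Lf, Aq in *.
 auto_derive; replace (x + - m) with (x - m) by ring. lra. field. lra.
Qed.

Lemma dS r m x : 0 <= r < 1 -> is_derive (Sf r m) x (((1+r^2)*cos(x-m) - 2*r)/(Aq r m x)^2).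
Proof. intros. pose proof (Aq_pos r m x H). unfold Sf, Aq in *.
 auto_derive; replace (x + - m) with (x - m) by ring. lra.
 pose proof (sc (x-m)).
 set (c := cos (x-m)) in *. set (s := sin (x-m)) in *. clearbody c s.
 field_simplify_eq. replace (s^2) with (1-c^2) by lra. ring. lra.
Qed.

Lemma sin_per m : sin (- PI - m) = sin (PI - m).
Proof. rewrite !sin_minus, sin_neg, cos_neg, sin_PI. ring. Qed.
Lemma cos_per m : cos (- PI - m) = cos (PI - m).
Proof. rewrite !cos_minus, sin_neg, cos_neg, sin_PI. ring. Qed.

Lemma G_per r m : Gf r m PI - Gf r m (-PI) = 2*PI.
Proof. unfold Gf. rewrite sin_per, cos_per. ring. Qed.
Lemma L_per r m : Lf r m PI - Lf r m (-PI) = 0.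
Proof. unfold Lf, Aq. rewrite cos_per. ring. Qed.
Lemma S_per r m : Sf r m PI - Sf r m (-PI) = 0.
Proof. unfold Sf, Aq. rewrite sin_per, cos_per. ring. Qed.

Lemma lin4 f1 f2 f3 f4 d1 d2 d3 d4 a b c d x :
  is_derive f1 x d1 -> is_derive f2 x d2 -> is_derive f3 x d3 -> is_derive f4 x d4 ->
  is_derive (fun t => a*f1 t + b*f2 t + c*f3 t + d*f4 t) x (a*d1+b*d2+c*d3+d*d4).
Proof. intros.
 apply (is_derive_plus (fun t => a*f1 t + b*f2 t + c*f3 t) (fun t => d*f4 t)).
 apply (is_derive_plus (fun t => a*f1 t + b*f2 t) (fun t => c*f3 t)).
 apply (is_derive_plus (fun t => a*f1 t) (fun t => b*f2 t)).
 all: apply is_derive_scal; assumption.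
Qed.

Lemma cont_int r1 m1 r2 m2 x : 0 <= r1 < 1 -> 0 <= r2 < 1 ->
  continuous (fun x => / (Aq r1 m1 x * Aq r2 m2 x)) x.
Proof. intros. apply (@ex_derive_continuous R_AbsRing R_NormedModule). pose proof (Aq_pos r1 m1 x H). pose proof (Aq_pos r2 m2 x H0).
 unfold Aq in *. auto_derive. replace (x + - m1) with (x - m1) by ring. replace (x + - m2) with (x - m2) by ring.
 apply Rgt_not_eq. apply Rmult_lt_0_compat; lra.
Qed.

Lemma lin2 f1 f2 d1 d2 a b x :
  is_derive f1 x d1 -> is_derive f2 x d2 ->
  is_derive (fun t => a*f1 t + b*f2 t) x (a*d1+b*d2).
Proof. intros.
 apply (is_derive_plus (fun t => a*f1 t) (fun t => b*f2 t)).
 all: apply is_derive_scal; assumption.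
Qed.

Lemma cos_shift x m1 m2 : cos (x-m1) = cos(x-m2)*cos(m1-m2) + sin(x-m2)*sin(m1-m2).
Proof. replace (x - m1) with ((x-m2) - (m1-m2)) by ring. apply cos_minus. Qed.
Lemma sin_shift x m1 m2 : sin (x-m1) = sin(x-m2)*cos(m1-m2) - cos(x-m2)*sin(m1-m2).
Proof. replace (x - m1) with ((x-m2) - (m1-m2)) by ring. apply sin_minus. Qed.

Lemma key r1 r2 cu su cd sd : su^2 + cu^2 = 1 -> sd^2 + cd^2 = 1 ->
  (r1^2+r2^2-2*r1*r2*cd)*(1 + r1^2*r2^2 - 2*r1*r2*cd) =
  ((r1^2*(1+r2^2) - r1*r2*cd*(1+r1^2)) - 2*r1*(r1*r2*sd)*(su*cd - cu*sd))*(1 + r2^2 - 2*r2*cu)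
  + ((r2^2*(1+r1^2) - r1*r2*cd*(1+r2^2)) + 2*r2*(r1*r2*sd)*su)*(1 + r1^2 - 2*r1*(cu*cd + su*sd)).
Proof. intros Hu Hd.
 ring_simplify. replace (su^2) with (1-cu^2) by lra. replace (sd^2) with (1-cd^2) by lra. ring.
Qed.

Lemma main_int r1 r2 m1 m2 : 0 <= r1 < 1 -> 0 <= r2 < 1 ->
  is_RInt (fun x => /(Aq r1 m1 x * Aq r2 m2 x)) (-PI) PI
   (2*PI*(1-r1^2*r2^2)/((1-r1^2)*(1-r2^2)*(1+r1^2*r2^2-2*r1*r2*cos(m1-m2)))).
Proof.
 intros H1 H2.
 pose proof (sc (m1-m2)) as Hd. pose proof (COS_bound (m1-m2)) as Hcb.
 assert (Hpi := PI_RGT_0).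
 assert (Hr12 : 0 <= r1*r2 < 1) by nra.
 assert (Hc1 : 0 <= r1*r2*(1-cos(m1-m2))) by (apply Rmult_le_pos; lra).
 assert (DP: 0 < 1 + r1^2*r2^2 - 2*r1*r2*cos(m1-m2)).
 { replace (1 + r1^2*r2^2 - 2*r1*r2*cos(m1-m2)) with ((1-r1*r2)^2 + 2*(r1*r2*(1-cos(m1-m2)))) by ring.
   assert (0 < (1-r1*r2)^2) by (apply pow_lt; lra). lra. }
 assert (EP: 0 <= r1^2+r2^2-2*r1*r2*cos(m1-m2)).
 { replace (r1^2+r2^2-2*r1*r2*cos(m1-m2)) with ((r1-r2)^2 + 2*(r1*r2*(1-cos(m1-m2)))) by ring.
   assert (0 <= (r1-r2)^2) by apply pow2_ge_0. lra. }
 destruct (Req_dec (r1^2+r2^2-2*r1*r2*cos(m1-m2)) 0) as [E0|En].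
 -
   assert ((r1-r2)^2 = 0).
   { assert (0 <= (r1-r2)^2) by apply pow2_ge_0.
     replace (r1^2+r2^2-2*r1*r2*cos(m1-m2)) with ((r1-r2)^2 + 2*(r1*r2*(1-cos(m1-m2)))) in E0 by ring. lra. } assert (Hr : r1 = r2) by nra. subst r1. rename r2 into r.
   assert (Hrc : r * cos (m1-m2) = r /\ r * sin(m1-m2) = 0).
   { destruct (Req_dec r 0) as [->|Hr0]. split; ring.
     assert (Hx : (r*r)*(1-cos(m1-m2)) = 0) by lra.
     apply Rmult_integral in Hx. destruct Hx as [Hx|Hx].
     { apply Rmult_integral in Hx. destruct Hx; contradiction. }
     assert (Hc : cos(m1-m2) = 1) by lra. split. rewrite Hc; ring.
     assert (Hs2 : sin(m1-m2)^2 = 0) by (rewrite Hc in Hd; lra).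
     assert (Hs : sin(m1-m2) = 0) by nra. rewrite Hs; ring. }
   destruct Hrc as [Hrc Hrs].
   assert (HAB : forall x, Aq r m1 x = Aq r m2 x).
   { intro x. unfold Aq. rewrite cos_shift with (m2:=m2).
     replace (2 * r * (cos (x - m2) * cos (m1 - m2) + sin (x - m2) * sin (m1 - m2)))
       with (2*(cos (x - m2) * (r*cos (m1 - m2)) + sin (x - m2) * (r*sin (m1 - m2)))) by ring.
     rewrite Hrc, Hrs. ring. }
   assert (Hr2 : 0 < 1 - r^2) by nra.
   set (F := fun t => (2*r/(1-r^2)^2) * Sf r m2 t + ((1+r^2)/(1-r^2)^3) * Gf r m2 t).
   assert (HI := is_RInt_derive F (fun x => /(Aq r m1 x * Aq r m2 x)) (-PI) PI).
   assert (HI' : is_RInt (fun x => /(Aq r m1 x * Aq r m2 x)) (-PI) PI (F PI - F (-PI))).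
   { apply HI.
     - intros x _. rewrite HAB. pose proof (Aq_pos r m2 x H2).
       assert (HD := lin2 _ _ _ _ (2*r/(1-r^2)^2) ((1+r^2)/(1-r^2)^3) x (dS r m2 x H2) (dG r m2 x H2)).
       replace (/ (Aq r m2 x * Aq r m2 x)) with
        (2 * r / (1 - r ^ 2) ^ 2 * (((1 + r ^ 2) * cos (x - m2) - 2 * r) / Aq r m2 x ^ 2) +
         (1 + r ^ 2) / (1 - r ^ 2) ^ 3 * ((1 - r ^ 2) / Aq r m2 x)).
       exact HD.
       unfold Aq in *. field. lra.
     - intros x _. apply cont_int; assumption. }
   replace (2 * PI * (1 - r ^ 2 * r ^ 2) /
     ((1 - r ^ 2) * (1 - r ^ 2) * (1 + r ^ 2 * r ^ 2 - 2 * r * r * cos (m1 - m2))))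
     with (F PI - F (-PI)). exact HI'.
   unfold F. 
   replace (2 * r / (1 - r ^ 2) ^ 2 * Sf r m2 PI + (1 + r ^ 2) / (1 - r ^ 2) ^ 3 * Gf r m2 PI -
     (2 * r / (1 - r ^ 2) ^ 2 * Sf r m2 (- PI) + (1 + r ^ 2) / (1 - r ^ 2) ^ 3 * Gf r m2 (- PI)))
     with (2 * r / (1 - r ^ 2) ^ 2 * (Sf r m2 PI - Sf r m2 (-PI)) + (1 + r ^ 2) / (1 - r ^ 2) ^ 3 * (Gf r m2 PI - Gf r m2 (-PI))) by ring.
   rewrite S_per, G_per.
   replace (1 + r ^ 2 * r ^ 2 - 2 * r * r * cos (m1 - m2)) with ((1-r^2)^2)
     by (replace (2*r*r*cos(m1-m2)) with (2*r*(r*cos(m1-m2))) by ring; rewrite Hrc; ring).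
   field. lra.
 -
   assert (EP' : 0 < r1^2+r2^2-2*r1*r2*cos(m1-m2)) by lra.
   set (cd := cos (m1-m2)) in *. set (sd := sin (m1-m2)) in *.
   set (E := r1^2+r2^2-2*r1*r2*cd) in *.
   set (D := 1 + r1^2*r2^2-2*r1*r2*cd) in *.
   set (N := E*D). set (Y := r1*r2*sd).
   set (X1 := r1^2*(1+r2^2) - r1*r2*cd*(1+r1^2)).
   set (X2 := r2^2*(1+r1^2) - r1*r2*cd*(1+r2^2)).
   assert (Hr1 : 0 < 1 - r1^2) by nra. assert (Hr2 : 0 < 1 - r2^2) by nra.
   assert (NP : 0 < N) by (unfold N; nra).
   set (F := fun t => (X1/((1-r1^2)*N))*Gf r1 m1 t + (-Y/N)*Lf r1 m1 t
                     + (X2/((1-r2^2)*N))*Gf r2 m2 t + (Y/N)*Lf r2 m2 t).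
   assert (HI := is_RInt_derive F (fun x => /(Aq r1 m1 x * Aq r2 m2 x)) (-PI) PI).
   assert (HI' : is_RInt (fun x => /(Aq r1 m1 x * Aq r2 m2 x)) (-PI) PI (F PI - F (-PI))).
   { apply HI.
     - intros x _. pose proof (Aq_pos r1 m1 x H1). pose proof (Aq_pos r2 m2 x H2).
       assert (HD := lin4 _ _ _ _ _ _ _ _ (X1/((1-r1^2)*N)) (-Y/N) (X2/((1-r2^2)*N)) (Y/N) x
          (dG r1 m1 x H1) (dL r1 m1 x H1) (dG r2 m2 x H2) (dL r2 m2 x H2)).
       replace (/ (Aq r1 m1 x * Aq r2 m2 x)) with
         (X1 / ((1 - r1 ^ 2) * N) * ((1 - r1 ^ 2) / Aq r1 m1 x) +
          - Y / N * (2 * r1 * sin (x - m1) / Aq r1 m1 x) +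
          X2 / ((1 - r2 ^ 2) * N) * ((1 - r2 ^ 2) / Aq r2 m2 x) +
          Y / N * (2 * r2 * sin (x - m2) / Aq r2 m2 x)).
       exact HD.
       pose proof (key r1 r2 (cos (x-m2)) (sin (x-m2)) cd sd (sc (x-m2)) Hd) as K.
       fold E D X1 X2 Y in K. fold N in K.
       assert (Hcs := cos_shift x m1 m2). assert (Hss := sin_shift x m1 m2). fold cd sd in Hcs, Hss.
       rewrite <- Hcs in K. replace (sin (x - m2) * cd - cos (x - m2) * sd) with (sin (x - m1)) in K by (rewrite Hss; ring).
       revert K. unfold Aq in *. intro K.
       set (A := 1 + r1 ^ 2 - 2 * r1 * cos (x - m1)) in *.
       set (B := 1 + r2 ^ 2 - 2 * r2 * cos (x - m2)) in *.
       match goal with |- ?a = ?b => change (@eq R a b) end.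
       clearbody A B N X1 X2 Y.
       transitivity (((X1 - 2 * r1 * Y * sin (x - m1)) * B + (X2 + 2 * r2 * Y * sin (x - m2)) * A)/(N*A*B)).
       field. repeat split; lra.
       rewrite <- K. field. repeat split; lra.
     - intros x _. apply cont_int; assumption. }
   replace (2 * PI * (1 - r1 ^ 2 * r2 ^ 2) / ((1 - r1 ^ 2) * (1 - r2 ^ 2) * D))
     with (F PI - F (-PI)). exact HI'.
   unfold F.
   match goal with |- ?L = _ => replace L with
     (X1/((1-r1^2)*N) * (Gf r1 m1 PI - Gf r1 m1 (-PI)) + (-Y/N) * (Lf r1 m1 PI - Lf r1 m1 (-PI))
     + X2/((1-r2^2)*N) * (Gf r2 m2 PI - Gf r2 m2 (-PI)) + (Y/N) * (Lf r2 m2 PI - Lf r2 m2 (-PI))) by ring end.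
   rewrite !G_per, !L_per.
   assert (HX : X1*(1-r2^2) + X2*(1-r1^2) = (1-r1^2*r2^2)*E) by (unfold X1, X2, E; ring).
   assert (0 < D) by exact DP. clearbody X1 X2 Y.
   transitivity (2*PI*(X1*(1-r2^2) + X2*(1-r1^2))/((1-r1^2)*(1-r2^2)*N)).
   field. repeat split; lra.
   rewrite HX. unfold N. field. repeat split; lra.
Qed.

Theorem theorem7 (rho1 mu2 rho2 mu1 nu : R)
  (Hrho1 : 0 <= rho1 < 1) (Hmu2 : - PI <= mu2 < PI) (Hrho2 : 0 <= rho2 < 1)
  (Hmu1 : - PI <= mu1 < PI) (Hnu : - PI <= nu < PI) :
  wc_posterior_density rho1 mu2 rho2 mu1 nu =
  ((1 - rho1 ^ 2) * (1 - rho2 ^ 2)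
     * (1 + rho1 ^ 2 * rho2 ^ 2 - 2 * rho1 * rho2 * cos (mu1 - mu2))
   / (2 * PI * (1 - rho1 ^ 2 * rho2 ^ 2)))
  * / ((1 + rho1 ^ 2 - 2 * rho1 * cos (nu - mu1))
       * (1 + rho2 ^ 2 - 2 * rho2 * cos (nu - mu2))).
Proof.
  assert (Hpi := PI_RGT_0).
  set (K := / (2*PI) * (1-rho1^2) * (/ (2*PI) * (1-rho2^2))).
  assert (Hprod : forall v, wc_density v rho1 mu1 * wc_density mu2 rho2 v
                     = K * / (Aq rho1 mu1 v * Aq rho2 mu2 v)).
  { intro v. pose proof (Aq_pos rho1 mu1 v Hrho1). pose proof (Aq_pos rho2 mu2 v Hrho2).
    unfold wc_density, K. unfold Aq in *.
    replace (mu1 - v) with (-(v-mu1)) by ring. rewrite cos_neg. field. lra. }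
  assert (HI : is_RInt (fun v => wc_density v rho1 mu1 * wc_density mu2 rho2 v) (-PI) PI
     (scal K (2*PI*(1-rho1^2*rho2^2)/((1-rho1^2)*(1-rho2^2)*(1+rho1^2*rho2^2-2*rho1*rho2*cos(mu1-mu2)))))).
  { apply is_RInt_ext with (fun v => scal K (/ (Aq rho1 mu1 v * Aq rho2 mu2 v))).
    intros x _. rewrite Hprod. reflexivity.
    apply (@is_RInt_scal R_NormedModule). apply main_int; assumption. }
  unfold wc_posterior_density. rewrite (is_RInt_unique _ _ _ _ HI). rewrite Hprod.
  change (scal K ?y) with (K * y).
  pose proof (Aq_pos rho1 mu1 nu Hrho1). pose proof (Aq_pos rho2 mu2 nu Hrho2).
  pose proof (COS_bound (mu1-mu2)).
  assert (Hc1 : 0 <= rho1*rho2*(1-cos(mu1-mu2))) by (apply Rmult_le_pos; nra).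
  assert (DP: 0 < 1 + rho1^2*rho2^2 - 2*rho1*rho2*cos(mu1-mu2)).
  { replace (1 + rho1^2*rho2^2 - 2*rho1*rho2*cos(mu1-mu2)) with ((1-rho1*rho2)^2 + 2*(rho1*rho2*(1-cos(mu1-mu2)))) by ring.
    assert (0 < (1-rho1*rho2)^2) by (apply pow_lt; nra). lra. }
  assert (0 < 1 - rho1^2) by nra. assert (0 < 1 - rho2^2) by nra.
  assert (0 < 1 - rho1^2*rho2^2) by nra.
  unfold K, Aq in *. field. repeat split; lra.
Qed.
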